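(* Let $n\geq2$, $p\in\mathbb{N}$, $s\in[p]$ and $t_0\in[n-1]$. Let $\Sigma_1,\Sigma_2\in\mathbb{R}^{p\times p}$ be symmetric positive definite and $\sigma^2=\|\Sigma_1\|_{\mathrm{op}}\vee\|\Sigma_2\|_{\mathrm{op}}$. Let $\Delta=\min(t_0,n-t_0)$ and $\gamma=s\log(ep/s)\vee\log\log(8n)$. Suppose that for some constant $c>0$, $$\Delta\Big\{\Big(\frac{\lambda^s_{\max}(\Sigma_1-\Sigma_2)}{\sigma^2-\lambda^s_{\max}(\Sigma_1-\Sigma_2)}\Big)\wedge\Big(\frac{\lambda^s_{\max}(\Sigma_1-\Sigma_2)}{\sigma^2-\lambda^s_{\max}(\Sigma_1-\Sigma_2)}\Big)^2\Big\}\geq c\gamma.$$ Then $$\sup_{v\in S^{p-1}_s}\ \frac{v^\top\Sigma_1v}{v^\top\Sigma_2v}\vee\frac{v^\top\Sigma_2v}{v^\top\Sigma_1v}\geq 1+c\frac{\gamma}{\Delta}\vee\sqrt{c\frac{\gamma}{\Delta}}.$$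
   Context: $S^{p-1}_s=\{v\in\mathbb{R}^p:\|v\|_2=1,\ \|v\|_0\leq s\}$, and for symmetric $A$, $\lambda^s_{\max}(A)=\sup_{v\in S^{p-1}_s}|v^\top Av|$. $\log$ is the natural logarithm. *)

(* Defs.v *)
From HB Require Import structures.
From mathcomp Require Import all_boot all_order all_algebra.
From mathcomp Require Import all_classical all_reals all_analysis.
Unset Strict Implicit. Unset Printing Implicit Defensive.
Import Order.TTheory GRing.Theory Num.Theory.
Local Open Scope ring_scope.
Local Open Scope classical_set_scope.

Section Defs.
Context {R : realType}.

Definition qform {p : nat} (A : 'M[R]_p) (v : 'cV[R]_p) : R :=
  (v^T *m A *m v) 0 0.

Definition norm2 {p : nat} (v : 'cV[R]_p) : R :=
  Num.sqrt (\sum_(i < p) v i 0 ^+ 2).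

Definition l0 {p : nat} (v : 'cV[R]_p) : nat := #|[set i | v i 0 != 0]|.

Definition sparse_sphere (p s : nat) : set 'cV[R]_p :=
  [set v | norm2 v = 1 /\ (l0 v <= s)%N].

Definition symmetric {p : nat} (A : 'M[R]_p) : Prop := A^T = A.

Definition pos_def {p : nat} (A : 'M[R]_p) : Prop :=
  symmetric A /\ forall v : 'cV[R]_p, v != 0 -> 0 < qform A v.

Definition opnorm {p : nat} (A : 'M[R]_p) : R :=
  sup [set norm2 (A *m v) | v in [set v : 'cV[R]_p | norm2 v = 1]].

Definition lambda_s_max {p : nat} (s : nat) (A : 'M[R]_p) : R :=
  sup [set `|qform A v| | v in sparse_sphere p s].

End Defs.

(* Main.v *)
Require Import Defs.
From HB Require Import structures.
From mathcomp Require Import all_boot all_order all_algebra.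
From mathcomp Require Import all_classical all_reals all_analysis.
From mathcomp Require Import ring lra zify.
Import Order.TTheory GRing.Theory Num.Theory.
Local Open Scope ring_scope.
Local Open Scope classical_set_scope.

Section H.
Variable R : realType.
Variable p : nat.
Implicit Types (A S : 'M[R]_p) (v w : 'cV[R]_p).

Lemma qformE A v : qform A v = \sum_j (\sum_i v i 0 * A i j) * v j 0.
Proof. rewrite /qform mxE; apply: eq_bigr => j _; rewrite mxE; congr (_ * _).
by apply: eq_bigr => i _; rewrite mxE. Qed.

Lemma qformB A B v : qform (A - B) v = qform A v - qform B v.
Proof. by rewrite /qform mulmxBr mulmxBl !mxE. Qed.

Lemma norm2_1 v : norm2 v = 1 -> \sum_i v i 0 ^+ 2 = 1.
Proof.
rewrite /norm2 => h; have h0 : 0 <= \sum_i v i 0 ^+ 2 by apply: sumr_ge0 => i _; exact: sqr_ge0.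
by rewrite -(sqr_sqrtr h0) h expr1n.
Qed.

Lemma coord_le1 v : norm2 v = 1 -> forall i, `|v i 0| <= 1.
Proof.
move=> /norm2_1 h i.
have : v i 0 ^+ 2 <= 1.
  rewrite -h (bigD1 i) //= lerDl; apply: sumr_ge0 => j _; exact: sqr_ge0.
rewrite -real_normK ?num_real // => h2.
by rewrite -(expr_le1 (n:=2)) // normr_ge0.
Qed.
Lemma norm2_ne0 v : norm2 v = 1 -> v != 0.
Proof.
move=> h; apply/eqP => v0; move: h; rewrite v0 /norm2.
rewrite (eq_bigr (fun _ => 0)) => [|i _]; last by rewrite mxE expr0n.
by rewrite big1_eq sqrtr0 => /esym/eqP; rewrite oner_eq0.
Qed.

Lemma qform_abs_le A v : norm2 v = 1 -> `|qform A v| <= \sum_j \sum_i `|A i j|.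
Proof.
move=> /coord_le1 h; rewrite qformE.
apply: le_trans (ler_norm_sum _ _ _) _; apply: ler_sum => j _.
rewrite normrM.
have h1 : `|\sum_i v i 0 * A i j| <= \sum_i `|A i j|.
  apply: le_trans (ler_norm_sum _ _ _) _; apply: ler_sum => i _; rewrite normrM.
  by rewrite -[X in _ <= X]mul1r ler_wpM2r.
by rewrite -[X in _ <= X]mulr1 ler_pM.
Qed.
Lemma sumsq_ge0 (u : 'cV[R]_p) : 0 <= \sum_i u i 0 ^+ 2.
Proof. by apply: sumr_ge0 => i _; exact: sqr_ge0. Qed.

Lemma qform_le_norm S v : norm2 v = 1 -> qform S v <= norm2 (S *m v).
Proof.
move=> hv; have hs := norm2_1 _ hv.
have -> : qform S v = \sum_i v i 0 * (S *m v) i 0.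
  by rewrite /qform -mulmxA mxE; apply: eq_bigr => i _; rewrite mxE.
set w := S *m v; set t := norm2 w.
have ht0 : 0 <= t by apply: sqrtr_ge0.
have htT : t ^+ 2 = \sum_i w i 0 ^+ 2 by rewrite sqr_sqrtr // sumsq_ge0.
have [t0|tpos] := eqVneq t 0.
  have w0 : forall i, w i 0 = 0.
    move=> i; apply/eqP; rewrite -(sqrf_eq0 (w i 0)).
    have /psumr_eq0P H : \sum_i w i 0 ^+ 2 = 0 by rewrite -htT t0 expr0n.
    by apply/eqP; rewrite H // => j _; exact: sqr_ge0.
  by rewrite big1 ?t0 // => i _; rewrite w0 mulr0.
have tp : 0 < t by rewrite lt_def tpos ht0.
have H : \sum_i (2 * t) * (v i 0 * w i 0) <= \sum_i (t ^+ 2 * v i 0 ^+ 2 + w i 0 ^+ 2).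
  apply: ler_sum => i _; have := sqr_ge0 (t * v i 0 - w i 0); nra.
rewrite -mulr_sumr big_split /= -mulr_sumr hs -htT in H.
nra.
Qed.

Lemma norm2_Sv_bound S w : norm2 w = 1 ->
  norm2 (S *m w) <= Num.sqrt (\sum_i (\sum_j `|S i j|) ^+ 2).
Proof.
move=> /coord_le1 h; rewrite /norm2 ler_sqrt; last by apply: sumr_ge0 => i _; exact: sqr_ge0.
apply: ler_sum => i _; rewrite mxE.
have h1 : `|\sum_j S i j * w j 0| <= \sum_j `|S i j|.
  apply: le_trans (ler_norm_sum _ _ _) _; apply: ler_sum => j _; rewrite normrM.
  by rewrite -[X in _ <= X]mulr1 ler_wpM2l.
rewrite -real_normK ?num_real //.
by rewrite lerXn2r ?nnegrE ?normr_ge0 //; apply: le_trans h1.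
Qed.

Lemma qform_le_opnorm S v : norm2 v = 1 -> qform S v <= opnorm S.
Proof.
move=> hv; apply: le_trans (qform_le_norm S v hv) _.
rewrite /opnorm; apply: sup_upper_bound; last by exists v.
split; first by exists (norm2 (S *m v)); exists v.
exists (Num.sqrt (\sum_i (\sum_j `|S i j|) ^+ 2)) => y [w hw <-].
exact: norm2_Sv_bound.
Qed.
Lemma qform0 S : qform S 0 = 0.
Proof. by rewrite /qform mulmx0 mxE. Qed.

Lemma pd_ge0 S z : pos_def S -> 0 <= qform S z.
Proof.
move=> [_ hS]; have [->|nz] := eqVneq z 0; first by rewrite qform0.
exact: ltW (hS _ nz).
Qed.

Lemma pd_unit S : pos_def S -> S \in unitmx.
Proof.
move=> hS; rewrite -row_free_unit; apply: inj_row_free => u uS.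
have q0 : qform S u^T = 0 by rewrite /qform trmxK uS mul0mx mxE.
have : u^T = 0.
  apply/eqP; apply: contraT => nz; move: hS => [_ /(_ _ nz)]; by rewrite q0 ltxx.
by move/(congr1 trmx); rewrite trmxK trmx0.
Qed.

Lemma qform_sub S x y t : Defs.symmetric S ->
  qform S (x - t *: y) = qform S x - 2 * t * (x^T *m S *m y) 0 0 + t ^+ 2 * qform S y.
Proof.
move=> sS.
have sym : (y^T *m S *m x) 0 0 = (x^T *m S *m y) 0 0.
  transitivity ((y^T *m S *m x)^T 0 0); first by rewrite [RHS]mxE.
  by rewrite !trmx_mul trmxK sS mulmxA.
rewrite /qform (_ : (x - t *: y)^T = x^T - t *: y^T); last by rewrite linearB linearZ.
rewrite !mulmxBl !mulmxBr -!scalemxAl -!scalemxAr.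
set a := x^T *m S *m x; set b := x^T *m S *m y; set b2 := y^T *m S *m x; set d := y^T *m S *m y.
rewrite !mxE. move: sym; rewrite !mxE => ->. ring.
Qed.

Lemma pd_lower S : pos_def S ->
  exists2 L, 0 < L & forall v, norm2 v = 1 -> L <= qform S v.
Proof.
move=> hS; have hU := pd_unit _ hS.
set B := invmx S; set M := B^T *m S *m B.
set K := \sum_j \sum_i `|M i j|.
have K0 : 0 <= K by apply: sumr_ge0 => j _; apply: sumr_ge0 => i _.
exists (K + 1)^-1; first by rewrite invr_gt0; lra.
move=> v hv; set y := B *m v.
have hc : qform S y = qform M v by rewrite /qform /M /y trmx_mul !mulmxA.
have yn0 : y != 0.
  apply: contraT; rewrite negbK => /eqP y0.
  have : S *m y = v by rewrite /y mulmxA mulmxV // mul1mx.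
  by rewrite y0 mulmx0 => v0; move: (norm2_ne0 _ hv); rewrite -v0 eqxx.
have cpos : 0 < qform S y by case: hS => _ /(_ _ yn0).
have cK : qform S y <= K by rewrite hc; apply: le_trans (qform_abs_le _ _ hv); exact: ler_norm.
have b1 : (v^T *m S *m y) 0 0 = 1.
  rewrite /y -mulmxA (mulmxA S) mulmxV // mul1mx mxE.
  by rewrite -(norm2_1 _ hv); apply: eq_bigr => i _; rewrite mxE expr2.
have := pd_ge0 _ (v - (qform S y)^-1 *: y) hS.
rewrite qform_sub; last by case: hS.
rewrite b1 => h.
set c := qform S y in cpos cK h *; set a := qform S v in h *.
have ha : c^-1 <= a.
  have e : c ^-1 ^+ 2 * c = c^-1 by rewrite expr2 -mulrA mulVf ?mulr1 // gt_eqF.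
  rewrite e in h; lra.
apply: le_trans ha; rewrite lef_pV2 ?posrE //; lra.
Qed.
End H.

Lemma real_key (R : realType) (a b sg R0 : R) : 0 < a -> 0 < b -> a <= sg -> b <= sg ->
  Num.max (a / b) (b / a) <= R0 -> `|a - b| * R0 <= sg * (R0 - 1).
Proof.
move=> a0 b0 asg bsg; rewrite ge_max !ler_pdivrMr // => /andP[h1 h2].
have [ab|ba] := leP a b.
  rewrite ler0_norm ?subr_le0 //.
  have R1 : 0 <= R0 - 1 by nra.
  have hb : 0 <= sg - b by lra.
  have := mulr_ge0 R1 hb; nra.
rewrite gtr0_norm ?subr_gt0 //.
have R1 : 0 <= R0 - 1 by nra.
have hb : 0 <= sg - a by lra.
have := mulr_ge0 R1 hb; nra.
Qed.

Lemma sphere_ne (R : realType) p s : (1 <= s <= p)%N -> exists v : 'cV[R]_p, sparse_sphere p s v.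
Proof.
move=> /andP[s1 sp]; have hp : (0 < p)%N by apply: leq_trans sp.
set o := Ordinal hp.
exists (delta_mx o 0); split.
  rewrite /norm2 (bigD1 o) //= big1 => [|i /negbTE ne]; last by rewrite mxE ne /= expr0n.
  by rewrite !mxE !eqxx /= expr1n addr0 sqrtr1.
rewrite /l0 (@eq_card _ _ (pred1 o)) ?card1 // => i.
apply/idP/idP => [|/eqP ->]; rewrite in_setE /= mxE ?eqxx ?andbT; last by rewrite oner_neq0.
by have [->|] := eqVneq i o; rewrite ?inE ?eqxx // => _; rewrite eqxx.
Qed.

Lemma ratio_ge1 (R : realType) (a b : R) : 0 < a -> 0 < b -> 1 <= Num.max (a / b) (b / a).
Proof.
move=> a0 b0; rewrite le_max; have [ab|ba] := leP a b.
  by apply/orP; right; rewrite ler_pdivlMr // mul1r.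
by apply/orP; left; rewrite ler_pdivlMr // mul1r ltW.
Qed.

Theorem lemma10 (R : realType) (n p s t0 : nat) (S1 S2 : 'M[R]_p) (c : R) :
  (2 <= n)%N -> (1 <= s <= p)%N -> (1 <= t0 <= n - 1)%N ->
  pos_def S1 -> pos_def S2 -> 0 < c ->
  let sigma2 := Num.max (opnorm S1) (opnorm S2) in
  let Delta : R := (minn t0 (n - t0))%:R in
  let gamma := Num.max (s%:R * ln (expR 1 * p%:R / s%:R)) (ln (ln (8 * n%:R))) in
  let lam := lambda_s_max s (S1 - S2) in
  let x := lam / (sigma2 - lam) in
  Delta * Num.min x (x ^+ 2) >= c * gamma ->
  sup [set Num.max (qform S1 v / qform S2 v) (qform S2 v / qform S1 v)
       | v in sparse_sphere p s]
    >= 1 + Num.max (c * gamma / Delta) (Num.sqrt (c * gamma / Delta)).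
Proof.
move=> hn hs ht h1 h2 hc sigma2 Delta gamma lam x H.
have [e0 he0] := sphere_ne R p s hs.
have Dpos : 0 < Delta.
  rewrite /Delta ltr0n leq_min; apply/andP; split; lia.
have gpos : 0 < gamma.
  rewrite /gamma lt_max; apply/orP; left; apply: mulr_gt0.
    by rewrite ltr0n; case/andP: hs.
  apply: ln_gt0.
  have e1 : 1 < expR (1 : R) by rewrite expR_gt1.
  have ps : 1 <= p%:R / s%:R :> R.
    case/andP: hs => s1 sp.
    by rewrite ler_pdivlMr ?ltr0n // mul1r ler_nat.
  rewrite -mulrA; nra.
set y := c * gamma / Delta.
have ypos : 0 < y by rewrite /y; apply: divr_gt0 => //; exact: mulr_gt0.
have hm : y <= Num.min x (x ^+ 2) by rewrite /y ler_pdivrMr // [X in _ <= X]mulrC.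
move: hm; rewrite le_min => /andP[hx hx2].
have xpos : 0 < x by apply: lt_le_trans hx.
have hsq : Num.sqrt y <= x.
  by rewrite -(ger0_norm (ltW xpos)) -sqrtr_sqr ler_sqrt // sqr_ge0.
set Rs := [set _ | v in _].
suff key : 1 + x <= sup Rs.
  by apply: le_trans key; rewrite lerD2l ge_max hx hsq.
have [L1 L1p hL1] := pd_lower _ _ S1 h1.
have [L2 L2p hL2] := pd_lower _ _ S2 h2.
have qpos1 : forall v, sparse_sphere p s v -> 0 < qform S1 v.
  by move=> v [hv _]; case: h1 => _ /(_ _ (norm2_ne0 _ _ _ hv)).
have qpos2 : forall v, sparse_sphere p s v -> 0 < qform S2 v.
  by move=> v [hv _]; case: h2 => _ /(_ _ (norm2_ne0 _ _ _ hv)).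
have qle1 : forall v, sparse_sphere p s v -> qform S1 v <= sigma2.
  by move=> v [hv _]; rewrite le_max (qform_le_opnorm _ _ _ _ hv).
have qle2 : forall v, sparse_sphere p s v -> qform S2 v <= sigma2.
  by move=> v [hv _]; rewrite le_max (qform_le_opnorm _ _ _ _ hv) orbT.
have sgpos : 0 < sigma2 by apply: lt_le_trans (qpos1 _ he0) (qle1 _ he0).
have hsup : has_sup Rs.
  split; first by eexists; exists e0.
  exists (sigma2 / L1 + sigma2 / L2) => r [v hv <-].
  have [hv1 _] := hv.
  have a0 := qpos1 _ hv; have b0 := qpos2 _ hv.
  have a1 := qle1 _ hv; have b1 := qle2 _ hv.
  have la := hL1 _ hv1; have lb := hL2 _ hv1.
  have d1 : 0 < sigma2 / L1 by apply: divr_gt0.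
  have d2 : 0 < sigma2 / L2 by apply: divr_gt0.
  have r1 : qform S1 v / qform S2 v <= sigma2 / L2.
    apply: ler_pM => //; [exact: ltW|by rewrite invr_ge0 ltW|by rewrite lef_pV2 ?posrE].
  have r2 : qform S2 v / qform S1 v <= sigma2 / L1.
    apply: ler_pM => //; [exact: ltW|by rewrite invr_ge0 ltW|by rewrite lef_pV2 ?posrE].
  rewrite ge_max; apply/andP; split; lra.
set R0 := sup Rs.
have hR0 : forall v, sparse_sphere p s v ->
    Num.max (qform S1 v / qform S2 v) (qform S2 v / qform S1 v) <= R0.
  by move=> v hv; apply: sup_upper_bound => //; exists v.
have R01 : 1 <= R0.
  by apply: le_trans (hR0 _ he0); apply: ratio_ge1; [exact: qpos1|exact: qpos2].
have lamb : lam * R0 <= sigma2 * (R0 - 1).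
  rewrite -ler_pdivlMr; last by lra.
  rewrite /lam /lambda_s_max; apply: ge_sup; first by eexists; exists e0.
  move=> r [v hv <-]; rewrite qformB ler_pdivlMr; last by lra.
  apply: real_key; [exact: qpos1|exact: qpos2|exact: qle1|exact: qle2|exact: hR0].
have lamlt : lam < sigma2 by nra.
have : x <= R0 - 1.
  rewrite /x ler_pdivrMr ?subr_gt0 //; nra.
lra.
Qed.
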